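(* Let $n\ge 1$, let $G$ be a subgroup of the symmetric group $S_n$ acting on $T=\{1,\ldots,n\}$, and let $\mathcal{B}$ be a block partition for $G$. Then the map $\Psi\mapsto \Psi|_T$ is a group isomorphism from the automorphism group $\mathrm{Aut}(U_{G\looparrowright\mathcal{B}})$ of the ordered set $U_{G\looparrowright\mathcal{B}}$ onto $G$. In particular, every automorphism of $U_{G\looparrowright\mathcal{B}}$ maps $T$ onto $T$, its restriction to $T$ is an element of $G$, every element of $G$ arises as such a restriction, and an automorphism is uniquely determined by its restriction to $T$.
   Context: A block of a permutation group $G$ on $\{1,\ldots,n\}$ is a set $B\subseteq\{1,\ldots,n\}$ such that for all $\Phi\in G$, $\Phi[B]\cap B\neq\emptyset$ implies $\Phi[B]=B$. For $A\subseteq\{1,\ldots,n\}$ write $G\cdot A=\{\sigma[A]:\sigma\in G\}$. Let $O_1,\ldots,O_\ell$ be the orbits of $G$ on $\{1,\ldots,n\}$, and for each $j$ let $B_j\subseteq O_j$ be a (nonempty) block of $G$. The partition $\mathcal{B}=\bigcup_{j=1}^\ell G\cdot B_j$ of $\{1,\ldots,n\}$ is called a block partition with orbit cut $\{B_1,\ldots,B_\ell\}$. For $B\in\mathcal{B}$ let $G|_B=\{\theta|_B:\theta\in G\}$ (restrictions of elements of $G$ to $B$, regarded as functions with domain $B$), and let $M=\bigcup_{B\in\mathcal{B}}G|_B$. For $\mu\in M$ let $D^\mu=\mathrm{dom}(\mu)\times\{\mu\}$. The ordered set $U_{G\looparrowright\mathcal{B}}$ has as underlying set the disjoint union of $F=\{\ell_1,u_1,\ldots,\ell_n,u_n\}$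 (new symbols), $G$ (its elements as abstract points), $\bigcup_{\mu\in M}D^\mu$, and $T=\{1,\ldots,n\}$. Its order is the reflexive–transitive closure of the following strict comparabilities: (1) $\ell_1<u_1>\ell_2<u_2>\cdots>\ell_n<u_n$ (so $F$ is a fence with $2n$ elements); (2) for every $\mu\in M$ and every $j\in\mathrm{dom}(\mu)$: $u_j<(j,\mu)$ and $(j,\mu)<\mu(j)\in T$; (3) for every $\theta\in G$ and every $B\in\mathcal{B}$: $\theta<x$ for all $x\in D^{\theta|_B}$. No other comparabilities hold; in particular $G$, $\bigcup_{\mu\in M}D^\mu$ and $T$ are antichains. *)

(* Defs.v *)
From HB Require Import structures.
From mathcomp Require Import all_boot all_fingroup.
Set Implicit Arguments. Unset Strict Implicit. Unset Printing Implicit Defensive.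

Section UG.
Variable n : nat.
Implicit Types (G : {set {perm 'I_n}}) (Bp : {set {set 'I_n}}).

Definition pimg (g : {perm 'I_n}) (A : {set 'I_n}) : {set 'I_n} := [set g x | x in A].

Definition is_block G (B : {set 'I_n}) : bool :=
  [forall g in G, (pimg g B :&: B != set0) ==> (pimg g B == B)].

Definition orbitsG G : {set {set 'I_n}} := [set orbit 'P G x | x : 'I_n].

Definition orbit_cut G (C : {set {set 'I_n}}) : Prop :=
  (forall O, O \in orbitsG G -> #|[set B in C | B \subset O]| = 1) /\
  (forall B, B \in C ->
     [/\ B != set0, is_block G B & exists2 O, O \in orbitsG G & B \subset O]).

Definition Gdot G (A : {set 'I_n}) : {set {set 'I_n}} := [set pimg g A | g in G].

Definition block_partition G Bp : Prop :=
  exists C, orbit_cut G C /\ Bp = \bigcup_(B in C) Gdot G B.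

Definition pfun := {ffun 'I_n -> option 'I_n}.

Definition restr (g : {perm 'I_n}) (B : {set 'I_n}) : pfun :=
  [ffun x => if x \in B then Some (g x) else None].

Definition inM G Bp (mu : pfun) : bool :=
  [exists g in G, exists B in Bp, mu == restr g B].

(* Ambient carrier: F = 'I_n * bool ((i,false) = l_{i+1}, (i,true) = u_{i+1}),
   G as permutations, D-elements (j, mu), and T = 'I_n. *)
Definition V : finType :=
  ((('I_n * bool) + {perm 'I_n}) + (('I_n * pfun) + 'I_n))%type.

Definition inU G Bp (v : V) : bool :=
  match v with
  | inl (inl _) => true
  | inl (inr g) => g \in G
  | inr (inl (j, mu)) => inM G Bp mu && (mu j != None)
  | inr (inr _) => true
  end.

Definition cover Bp (v w : V) : bool :=
  match v, w with
  | inl (inl (i, false)), inl (inl (j, true)) =>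
      (i == j) || (val i == (val j).+1)          (* l_k < u_k, l_{k+1} < u_k *)
  | inl (inl (i, true)), inr (inl (j, _)) => i == j
  | inr (inl (j, mu)), inr (inr t) => mu j == Some t
  | inl (inr g), inr (inl (j, mu)) =>
      [exists B in Bp, (mu == restr g B) && (j \in B)]
  | _, _ => false
  end.

Definition Uty G Bp : finType := {v : V | inU G Bp v}.

Definition Ule G Bp (x y : Uty G Bp) : bool :=
  connect (fun a b : Uty G Bp => cover Bp (val a) (val b)) x y.

Definition inTpart (v : V) : bool := if v is inr (inr _) then true else false.

Definition tT G Bp (i : 'I_n) : Uty G Bp :=
  exist (fun v => inU G Bp v) (inr (inr i)) (erefl true).

Definition AutU_set G Bp : {set {perm Uty G Bp}} :=
  [set Psi : {perm Uty G Bp} |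
     [forall x, forall y, Ule x y == Ule (Psi x) (Psi y)]].

Lemma AutU_group_set G Bp : group_set (AutU_set G Bp).
Proof.
apply/group_setP; split.
  by rewrite inE; apply/forallP => x; apply/forallP => y; rewrite !perm1.
move=> P Q; rewrite !inE => /forallP HP /forallP HQ.
apply/forallP => x; apply/forallP => y; rewrite !permM.
move/forallP: (HP x) => /(_ y) /eqP ->.
by move/forallP: (HQ (P x)) => /(_ (P y)) /eqP ->.
Qed.

Canonical AutU G Bp : {group {perm Uty G Bp}} := Group (AutU_group_set G Bp).

End UG.

(* Main.v *)
Require Import Defs.
From HB Require Import structures.
From mathcomp Require Import all_boot all_fingroup.
Set Implicit Arguments. Unset Strict Implicit. Unset Printing Implicit Defensive.
Local Open Scope group_scope.

Section Basics.
Variable n : nat.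
Variable Bp : {set {set 'I_n}}.

Definition kind (v : V n) : nat :=
  match v with
  | inl (inl (_, false)) => 0
  | inl (inl (_, true)) => 1
  | inl (inr _) => 2
  | inr (inl _) => 3
  | inr (inr _) => 4
  end.

Definition Rs (x y : V n) : bool :=
  match x, y with
  | inl (inl (i, false)), inl (inl (j, true)) => (i == j) || (val i == (val j).+1)
  | inl (inl (_, false)), inr _ => true
  | inl (inl (j, true)), inr (inl (k, _)) => j == k
  | inl (inl (_, true)), inr (inr _) => true
  | inl (inr g), inr (inl (j, mu)) => Defs.cover Bp (inl (inr g)) (inr (inl (j, mu)))
  | inl (inr _), inr (inr _) => true
  | inr (inl (j, mu)), inr (inr t) => mu j == Some t
  | _, _ => false
  end.

Lemma cover_Rs x y : Defs.cover Bp x y -> Rs x y.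
Proof.
by case: x => [[[i []]|g]|[[j mu]|t]]; case: y => [[[i' []]|g']|[[j' mu']|t']].
Qed.

Lemma Rs_step x y z : Rs x y -> Defs.cover Bp y z -> Rs x z.
Proof.
by case: x => [[[i []]|g]|[[j mu]|t]]; case: y => [[[i' []]|g']|[[j' mu']|t']];
   case: z => [[[i'' []]|g'']|[[j'' mu'']|t'']].
Qed.

Lemma Rs_kind x y : Rs x y -> [&& kind x < kind y, kind y != 0 & kind y != 2].
Proof.
by case: x => [[[i []]|g]|[[j mu]|t]]; case: y => [[[i' []]|g']|[[j' mu']|t']].
Qed.
End Basics.

Lemma conn_map (T : finType) (e : rel T) (h : T -> T) :
  (forall a b, e a b -> e (h a) (h b)) ->
  forall x y, connect e x y -> connect e (h x) (h y).
Proof.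
move=> H x y /connectP [p pth ->]; apply/connectP; exists (map h p); last by rewrite last_map.
by elim: p x pth => //= a p IH x /andP [exa pa]; rewrite H //= IH.
Qed.

Section Main.
Variable n : nat.
Variable G : {group {perm 'I_n}}.
Variable Bp : {set {set 'I_n}}.
Hypothesis hBp : block_partition G Bp.
Hypothesis n_gt0 : 0 < n.

Local Notation U := (Uty G Bp).
Local Notation cov := (fun a b : U => Defs.cover Bp (val a) (val b)).

Lemma Ule_Rs (x y : U) : Ule x y -> x = y \/ Rs Bp (val x) (val y).
Proof.
move=> /connectP [p pth ->].
elim/last_ind: p pth => [|p z IH]; first by left.
rewrite rcons_path last_rcons => /andP [pp c]; right.
case: (IH pp) => [e|]; first by rewrite -e in c; exact: cover_Rs.
by move/Rs_step; apply.
Qed.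

Lemma Ule_kind (x y : U) : Ule x y -> x = y \/
   [&& kind (val x) < kind (val y), kind (val y) != 0 & kind (val y) != 2].
Proof. by case/Ule_Rs => [->|/Rs_kind]; [left|right]. Qed.

Lemma cov_Ule (x y : U) : Defs.cover Bp (val x) (val y) -> Ule x y.
Proof. by move=> c; apply: connect1. Qed.

Lemma Ule_aut Psi (x y : U) : Psi \in AutU G Bp -> Ule (Psi x) (Psi y) = Ule x y.
Proof. by rewrite inE => /forallP /(_ x) /forallP /(_ y) /eqP. Qed.

Lemma covering j : exists2 B, B \in Bp & j \in B.
Proof.
case: hBp => C [[hO hC] ->].
have Oin : orbit 'P G j \in orbitsG G by apply/imsetP; exists j.
have := hO _ Oin => /eqP /cards1P [B EB].
have : B \in [set B in C | B \subset orbit 'P G j] by rewrite EB set11.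
rewrite inE => /andP [BC BO].
case: (hC B BC) => /set0Pn [b bB] _ _.
have := subsetP BO b bB => /orbitP [g gG gj].
exists (pimg g^-1 B).
  apply/bigcupP; exists B => //; apply/imsetP; exists g^-1 => //; exact: groupVr.
apply/imsetP; exists b => //; rewrite -gj /= apermE -permM mulgV perm1 //.
Qed.

Lemma partition_uniq B1 B2 j : B1 \in Bp -> B2 \in Bp -> j \in B1 -> j \in B2 -> B1 = B2.
Proof.
case: hBp => C [[hO hC] ->].
move=> /bigcupP [C1 C1C /imsetP [g1 g1G ->]] /bigcupP [C2 C2C /imsetP [g2 g2G ->]].
move=> /imsetP [c1 c1C1 e1] /imsetP [c2 c2C2 e2].
case: (hC C1 C1C) => _ bl1 [O1 O1o sO1].
case: (hC C2 C2C) => _ bl2 [O2 O2o sO2].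
have eO : O1 = O2.
  move: O1o O2o sO1 sO2 => /imsetP [x1 _ ->] /imsetP [x2 _ ->] sO1 sO2.
  have h1 := subsetP sO1 c1 c1C1. have h2 := subsetP sO2 c2 c2C2.
  rewrite -(orbit_eqP h1) -(orbit_eqP h2); apply/orbit_eqP.
  apply/orbitP; exists (g2 * g1^-1); first by rewrite groupM ?groupV.
  by rewrite /= apermE permM -e2 e1 -permM mulgV perm1.
subst O2.
have := hO _ O1o => /eqP /cards1P [B EB].
have : C1 \in [set B in C | B \subset O1] by rewrite inE C1C sO1.
have : C2 \in [set B in C | B \subset O1] by rewrite inE C2C sO2.
rewrite EB !inE => /eqP eC2 /eqP eC1; subst C1 C2.
have hG : g1 * g2^-1 \in G by rewrite groupM ?groupV.
have := forallP bl1 (g1 * g2^-1); rewrite hG /= => /implyP H.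
have eq : pimg (g1 * g2^-1) B = B.
  apply/eqP; apply: H; apply/set0Pn; exists c2; rewrite inE c2C2 andbT.
  by apply/imsetP; exists c1 => //; rewrite permM -e1 e2 -permM mulgV perm1.
rewrite -{2}eq; apply/setP => x; apply/imsetP/imsetP => [[y yB ->]|[y /imsetP [z zB ->] ->]].
  exists ((g1 * g2^-1) y); first by apply/imsetP; exists y.
  by rewrite permM permKV.
by exists z => //; rewrite permM permKV.
Qed.


Local Close Scope group_scope.

Lemma kind_le4 (v : V n) : kind v <= 4.
Proof. by case: v => [[[i []]|g]|[[j mu]|t]]. Qed.

Definition lU (i : 'I_n) : U := exist (fun v => inU G Bp v) (inl (inl (i, false)) : V n) (erefl true).
Definition uU (i : 'I_n) : U := exist (fun v => inU G Bp v) (inl (inl (i, true)) : V n) (erefl true).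

Lemma restrE (th : {perm 'I_n}) (B : {set 'I_n}) (j : 'I_n) : restr th B j = if j \in B then Some (th j) else None.
Proof. by rewrite ffunE. Qed.

Lemma inD_restr (th : {perm 'I_n}) (B : {set 'I_n}) (j : 'I_n) : th \in G -> B \in Bp -> j \in B ->
  inU G Bp (inr (inl (j, restr th B))).
Proof.
move=> thG BB jB; rewrite /= restrE jB andbT.
by apply/existsP; exists th; rewrite thG; apply/existsP; exists B; rewrite BB eqxx.
Qed.

Definition dU (th : {perm 'I_n}) (B : {set 'I_n}) (j : 'I_n) (thG : th \in G) (BB : B \in Bp) (jB : j \in B) : U :=
  exist (fun v => inU G Bp v) _ (inD_restr thG BB jB).

Lemma W1 (x : U) : kind (val x) <= 2 ->
  exists y : U, [/\ Ule x y, kind (val y) != 4 & kind (val y) != kind (val x)].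
Proof.
case: x => [[[[i []]|th]|[[j mu]|t]]] hv //= _.
- have [B BB jB] := covering i.
  exists (dU (group1 G) BB jB); split => //; apply: cov_Ule; by rewrite /= eqxx.
- by exists (uU i); split => //; apply: cov_Ule; rewrite /= eqxx.
- have [B BB jB] := covering (Ordinal n_gt0).
  exists (dU hv BB jB); split => //; apply: cov_Ule => /=.
  by apply/existsP; exists B; rewrite BB eqxx jB.
Qed.

Lemma W0 (x : U) : kind (val x) != 4 -> exists y : U, Ule x y /\ y != x.
Proof.
move=> k4; case: (leqP (kind (val x)) 2) => [/W1 [y [uy _ ky]]|k3].
  by exists y; split => //; apply: contraNneq ky => ->.
case: x k4 k3 => [[[[i []]|th]|[[j mu]|t]]] hv //= _ _.
have := hv => /andP [_]; case e: (mu j) => [t|] // _.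
exists (exist (fun v => inU G Bp v) (inr (inr t) : V n) (erefl true)); split => //.
by apply: cov_Ule; rewrite /= e.
Qed.

Lemma W2 (x : U) : kind (val x) = 1 -> exists w : U, Ule w x /\ w != x.
Proof.
case: x => [[[[i []]|th]|[[j mu]|t]]] hv //= _.
exists (lU i); split; first by apply: cov_Ule; rewrite /= eqxx.
by apply/eqP => /(congr1 val).
Qed.

Lemma W3 (x : U) : kind (val x) = 0 -> exists y : U, kind (val y) = 1 /\ Ule x y.
Proof.
case: x => [[[[i []]|th]|[[j mu]|t]]] hv //= _.
exists (uU i); split => //; apply: cov_Ule; by rewrite /= eqxx.
Qed.

Local Notation Aut := (AutU G Bp).

Lemma iff_from k :
  (forall Psi, Psi \in Aut -> forall x : U, kind (val x) = k -> kind (val (Psi x)) = k) ->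
  forall Psi, Psi \in Aut -> forall x : U, (kind (val (Psi x)) == k) = (kind (val x) == k).
Proof.
move=> H Psi A x; apply/eqP/eqP; last exact: H.
by move=> h; have := H _ (groupVr A) _ h; rewrite permK.
Qed.

Lemma presT Psi (x : U) : Psi \in Aut -> kind (val x) = 4 -> kind (val (Psi x)) = 4.
Proof.
move=> A k4; apply/eqP; apply/negP => /negP /W0 [y [uy ny]].
have : Ule x ((Psi^-1)%g y) by rewrite -(Ule_aut _ _ A) permKV.
case/Ule_kind => [e|]; first by move: ny; rewrite e permKV eqxx.
by rewrite k4 ltnNge kind_le4.
Qed.

Lemma iffT Psi (x : U) : Psi \in Aut -> (kind (val (Psi x)) == 4) = (kind (val x) == 4).
Proof. by move=> A; apply: iff_from => // P PA y; apply: presT. Qed.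

Lemma presD Psi (x : U) : Psi \in Aut -> kind (val x) = 3 -> kind (val (Psi x)) = 3.
Proof.
move=> A k3.
have nT : kind (val (Psi x)) != 4 by rewrite iffT // k3.
case: (leqP (kind (val (Psi x))) 2) => [/W1 [y [uy y4 yk]]|]; last first.
  by move: nT (kind_le4 (val (Psi x))); case: (kind _) => [|[|[|[|[|]]]]].
have : Ule x ((Psi^-1)%g y) by rewrite -(Ule_aut _ _ A) permKV.
case/Ule_kind => [e|]; first by move: yk; rewrite e permKV eqxx.
rewrite k3 => /andP [h _].
have : kind (val ((Psi^-1)%g y)) == 4.
  by move: h (kind_le4 (val ((Psi^-1)%g y))); case: (kind _) => [|[|[|[|[|]]]]].
by rewrite -(iffT _ A) permKV (negbTE y4).
Qed.

Lemma iffD Psi (x : U) : Psi \in Aut -> (kind (val (Psi x)) == 3) = (kind (val x) == 3).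
Proof. by move=> A; apply: iff_from => // P PA y; apply: presD. Qed.

Lemma presu Psi (x : U) : Psi \in Aut -> kind (val x) = 1 -> kind (val (Psi x)) = 1.
Proof.
move=> A k1.
have nT : kind (val (Psi x)) != 4 by rewrite iffT // k1.
have nD : kind (val (Psi x)) != 3 by rewrite iffD // k1.
have [w [uw nw]] := W2 k1.
have : Ule (Psi w) (Psi x) by rewrite Ule_aut.
case/Ule_kind => [/perm_inj e|/and3P [_ h0 h2]]; first by rewrite e eqxx in nw.
by move: nT nD h0 h2 (kind_le4 (val (Psi x))); case: (kind _) => [|[|[|[|[|]]]]].
Qed.

Lemma iffu Psi (x : U) : Psi \in Aut -> (kind (val (Psi x)) == 1) = (kind (val x) == 1).
Proof. by move=> A; apply: iff_from => // P PA y; apply: presu. Qed.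

Lemma presl Psi (x : U) : Psi \in Aut -> kind (val x) = 0 -> kind (val (Psi x)) = 0.
Proof.
move=> A k0.
have nT : kind (val (Psi x)) != 4 by rewrite iffT // k0.
have nD : kind (val (Psi x)) != 3 by rewrite iffD // k0.
have nu : kind (val (Psi x)) != 1 by rewrite iffu // k0.
have [y [ky uy]] := W3 k0.
have ky' : kind (val (Psi y)) = 1 by apply/eqP; rewrite iffu // ky.
have : Ule (Psi x) (Psi y) by rewrite Ule_aut.
case/Ule_kind => [e|/and3P [h _ _]]; first by rewrite e ky' in nu.
by move: nT nD nu h (kind_le4 (val (Psi x))); rewrite ky'; case: (kind _) => [|[|[|[|[|]]]]].
Qed.

Lemma iffl Psi (x : U) : Psi \in Aut -> (kind (val (Psi x)) == 0) = (kind (val x) == 0).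
Proof. by move=> A; apply: iff_from => // P PA y; apply: presl. Qed.

Lemma kind_pres Psi (x : U) : Psi \in Aut -> kind (val (Psi x)) = kind (val x).
Proof.
move=> A.
have := iffT x A; have := iffD x A; have := iffu x A; have := iffl x A.
move: (kind_le4 (val x)) (kind_le4 (val (Psi x))).
by case: (kind (val x)) => [|[|[|[|[|]]]]]; case: (kind (val (Psi x))) => [|[|[|[|[|]]]]].
Qed.

Lemma kind0E (x : U) : kind (val x) = 0 -> exists i, x = lU i.
Proof.
case: x => [[[[i []]|th]|[[j mu]|t]]] hv //= _.
by exists i; apply: val_inj.
Qed.

Lemma kind1E (x : U) : kind (val x) = 1 -> exists i, x = uU i.
Proof.
case: x => [[[[i []]|th]|[[j mu]|t]]] hv //= _.
by exists i; apply: val_inj.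
Qed.

Lemma lU_inj : injective lU.
Proof. by move=> i j /(congr1 val) [->]. Qed.
Lemma uU_inj : injective uU.
Proof. by move=> i j /(congr1 val) [->]. Qed.

Lemma Ule_lu i j : Ule (lU i) (uU j) = (i == j) || (val i == (val j).+1).
Proof.
apply/idP/idP; last by move=> h; apply: cov_Ule.
by case/Ule_Rs => // /(congr1 val).
Qed.

Lemma Psi_l Psi i : Psi \in Aut -> exists a, Psi (lU i) = lU a.
Proof. by move=> A; apply: kind0E; rewrite kind_pres. Qed.
Lemma Psi_u Psi i : Psi \in Aut -> exists a, Psi (uU i) = uU a.
Proof. by move=> A; apply: kind1E; rewrite kind_pres. Qed.

Lemma fence_fix Psi : Psi \in Aut -> forall i, Psi (lU i) = lU i /\ Psi (uU i) = uU i.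
Proof.
move=> A.
suff H : forall k (i : 'I_n), val i = k -> Psi (lU i) = lU i /\ Psi (uU i) = uU i.
  by move=> i; apply: (H (val i)).
elim=> [|k IH] i ik.
  have lfix : Psi (lU i) = lU i.
    have [a ea] := Psi_l i A.
    case: (posnP (val a)) => a0.
      by rewrite ea; congr lU; apply: val_inj; rewrite /= a0 ik.
    pose a' : 'I_n := Ordinal (leq_ltn_trans (leq_pred (val a)) (ltn_ord a)).
    have AV : (Psi^-1)%g \in Aut by rewrite groupV.
    have gl : (Psi^-1)%g (lU a) = lU i by rewrite -ea permK.
    have [b1 e1] := Psi_u a AV.
    have [b2 e2] := Psi_u a' AV.
    have h1 : Ule (lU i) (uU b1) by rewrite -gl -e1 Ule_aut // Ule_lu eqxx.
    have h2 : Ule (lU i) (uU b2).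
      by rewrite -gl -e2 Ule_aut // Ule_lu /= prednK // eqxx orbT.
    move: h1 h2; rewrite !Ule_lu ik /= => /orP [/eqP b1i|//] /orP [/eqP b2i|//].
    have : (Psi^-1)%g (uU a) = (Psi^-1)%g (uU a') by rewrite e1 e2 -b1i -b2i.
    move/perm_inj/uU_inj/(congr1 val) => /= h.
    move: a0 => /= a0; have := ltn_predL a; rewrite -h ltnn a0 //.
  split => //.
  have [b eb] := Psi_u i A.
  have : Ule (lU i) (uU b) by rewrite -lfix -eb Ule_aut // Ule_lu eqxx.
  by rewrite Ule_lu ik => /orP [/eqP ib|//]; rewrite eb ib.
have ki : k < n by have := ltn_ord i; rewrite ik; apply: ltnW.
pose i0 : 'I_n := Ordinal ki.
have [l0 u0] := IH i0 erefl.
have ne : i != i0 by apply/eqP => /(congr1 val); rewrite /= ik => /eqP; rewrite -{2}(addn0 k) -addn1 eqn_add2l.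
have lfix : Psi (lU i) = lU i.
  have [a ea] := Psi_l i A.
  have : Ule (lU a) (uU i0) by rewrite -ea -u0 Ule_aut // Ule_lu ik eqxx orbT.
  rewrite Ule_lu => /orP [/eqP ai0|/eqP h].
    by move: ne; rewrite ai0 -l0 in ea; rewrite (lU_inj (perm_inj ea)) eqxx.
  by rewrite ea; congr lU; apply: val_inj; rewrite h ik.
split => //.
have [b eb] := Psi_u i A.
have : Ule (lU i) (uU b) by rewrite -lfix -eb Ule_aut // Ule_lu eqxx.
rewrite Ule_lu => /orP [/eqP ib|/eqP h]; first by rewrite eb ib.
have bi0 : b = i0 by apply: val_inj; apply/eqP; rewrite /= -eqSS -h ik.
by move: ne; rewrite bi0 -u0 in eb; rewrite (uU_inj (perm_inj eb)) eqxx.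
Qed.

Lemma Ule_Rs' (x y : U) : Ule x y -> kind (val x) != kind (val y) -> Rs Bp (val x) (val y).
Proof. by case/Ule_Rs => [->|//]; rewrite eqxx. Qed.

Definition fext (Psi : {perm U}) (i : 'I_n) : 'I_n :=
  match val (Psi (tT G Bp i)) with inr (inr t) => t | _ => i end.

Lemma fextE Psi i : Psi \in Aut -> Psi (tT G Bp i) = tT G Bp (fext Psi i).
Proof.
move=> A; have := kind_pres (tT G Bp i) A; rewrite /fext.
case: (Psi (tT G Bp i)) => [[[[?[]]|?]|[[??]|t]] hv] //= _.
exact: val_inj.
Qed.

Lemma tT_inj : injective (tT G Bp).
Proof. by move=> i j /(congr1 val) [->]. Qed.

Definition fperm (Psi : {perm U}) : {perm 'I_n} :=
  insubd (1%g : {perm 'I_n}) [ffun i => fext Psi i].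

Lemma fpermE Psi : Psi \in Aut -> forall i, fperm Psi i = fext Psi i.
Proof.
move=> A i.
have inj : injectiveb [ffun i => fext Psi i].
  apply/injectiveP => a b; rewrite !ffunE => e.
  have : Psi (tT G Bp a) = Psi (tT G Bp b) by rewrite !fextE // e.
  by move/perm_inj/tT_inj.
by rewrite -pvalE /fperm insubdK // ffunE.
Qed.

Lemma fperm_morph : {in Aut &, {morph fperm : x y / (x * y)%g >-> (x * y)%g}}.
Proof.
move=> P Q PA QA; apply/permP => i.
rewrite permM !fpermE ?groupM //; apply: tT_inj.
by rewrite -!fextE ?groupM // permM fextE // fextE.
Qed.

Definition fmorph : {morphism Aut >-> {perm 'I_n}} := Morphism fperm_morph.

Definition gU (th : {perm 'I_n}) (thG : th \in G) : U :=
  exist (fun v => inU G Bp v) (inl (inr th) : V n) thG.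

Lemma Gmap Psi th (thG : th \in G) th' : Psi \in Aut ->
  val (Psi (gU thG)) = inl (inr th') -> forall j, th' j = fext Psi (th j).
Proof.
move=> A eth j.
have [B BB jB] := covering j.
pose d := dU thG BB jB.
have h1 : Ule (gU thG) d by apply: cov_Ule => /=; apply/existsP; exists B; rewrite BB eqxx jB.
have h2 : Ule d (tT G Bp (th j)) by apply: cov_Ule; rewrite /= restrE jB.
have h3 : Ule (uU j) d by apply: cov_Ule; rewrite /= eqxx.
have kd : kind (val (Psi d)) = 3 by rewrite kind_pres.
have [lf uf] := fence_fix A j.
rewrite -(Ule_aut _ _ A) in h1; rewrite -(Ule_aut _ _ A) fextE // in h2.
rewrite -(Ule_aut _ _ A) uf in h3.
move: (Ule_Rs' h1) (Ule_Rs' h2) (Ule_Rs' h3) kd; rewrite eth.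
case: (Psi d) => [[[[?[]]|?]|[[j' mu']|t]] hv] //= R1 R2 R3 _.
have := R3 erefl => /eqP ej; subst j'.
have := R1 erefl => /existsP [B' /andP [B'B /andP [/eqP emu jB']]].
have := R2 erefl; rewrite emu restrE jB' => /eqP [].
by [].
Qed.

Lemma fperm_in_G Psi : Psi \in Aut -> fperm Psi \in G.
Proof.
move=> A.
have : kind (val (Psi (gU (group1 G)))) = 2 by rewrite kind_pres.
case eP: (val (Psi (gU (group1 G)))) => [[[?[]]|th']|[[??]|?]] //= _.
have th'G : th' \in G by have := valP (Psi (gU (group1 G))); rewrite eP.
suff -> : fperm Psi = th' by [].
apply/permP => j; rewrite fpermE //.
by rewrite (Gmap A eP j) perm1.
Qed.

Lemma gfix Psi th (thG : th \in G) : Psi \in Aut -> fperm Psi = 1%g ->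
  Psi (gU thG) = gU thG.
Proof.
move=> A f1.
have : kind (val (Psi (gU thG))) = 2 by rewrite kind_pres.
case eP: (val (Psi (gU thG))) => [[[?[]]|th']|[[??]|?]] //= _.
apply: val_inj; rewrite eP /=; congr (inl (inr _)); apply/permP => j.
by rewrite (Gmap A eP j) -fpermE // f1 perm1.
Qed.

Lemma ker_triv Psi : Psi \in Aut -> fperm Psi = 1%g -> Psi = 1%g.
Proof.
move=> A f1; apply/permP => x; rewrite perm1.
have := kind_pres x A.
case: x => [[[[i []]|th]|[[j mu]|t]] hv] /= k.
- have [_ uf] := fence_fix A i.
  by rewrite (_ : exist (fun v => inU G Bp v) _ hv = uU i) ?uf //; apply: val_inj.
- have [lf _] := fence_fix A i.
  by rewrite (_ : exist (fun v => inU G Bp v) _ hv = lU i) ?lf //; apply: val_inj.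
- by have := gfix hv A f1.
- have := hv => /andP [/existsP [th /andP [thG /existsP [B /andP [BB /eqP emu]]]] _].
  have jB : j \in B.
    by have := hv => /andP [_]; rewrite emu restrE; case: ifP.
  rewrite (_ : exist (fun v => inU G Bp v) _ hv = dU thG BB jB); last by apply: val_inj; rewrite /= emu.
  have h1 : Ule (gU thG) (dU thG BB jB).
    by apply: cov_Ule => /=; apply/existsP; exists B; rewrite BB eqxx jB.
  have h3 : Ule (uU j) (dU thG BB jB) by apply: cov_Ule; rewrite /= eqxx.
  have [_ uf] := fence_fix A j.
  rewrite -(Ule_aut _ _ A) (gfix thG A f1) in h1.
  rewrite -(Ule_aut _ _ A) uf in h3.
  have kd : kind (val (Psi (dU thG BB jB))) = 3 by rewrite kind_pres.
  move: (Ule_Rs' h1) (Ule_Rs' h3) kd.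
  case eP: (Psi (dU thG BB jB)) => [[[[?[]]|?]|[[j' mu']|t]] hv'] //= R1 R3 _.
  have := R3 erefl => /eqP ej; subst j'.
  have := R1 erefl => /existsP [B' /andP [B'B /andP [/eqP emu' jB']]].
  apply: val_inj => /=; rewrite emu'.
  by rewrite (partition_uniq B'B BB jB' jB).
- rewrite (_ : exist (fun v => inU G Bp v) _ hv = tT G Bp t); last by apply: val_inj.
  by rewrite fextE // -fpermE // f1 perm1.
Qed.

Definition omf (s : {perm 'I_n}) (mu : pfun n) : pfun n := [ffun x => omap s (mu x)].

Definition phi (s : {perm 'I_n}) (v : V n) : V n :=
  match v with
  | inl (inl p) => inl (inl p)
  | inl (inr th) => inl (inr (th * s)%g)
  | inr (inl (j, mu)) => inr (inl (j, omf s mu))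
  | inr (inr t) => inr (inr (s t))
  end.

Lemma omfK s : cancel (omf s) (omf (s^-1)%g).
Proof.
move=> mu; apply/ffunP => x; rewrite !ffunE; case: (mu x) => //= y.
by rewrite permK.
Qed.

Lemma omf_inj s : injective (omf s).
Proof. exact: can_inj (omfK s). Qed.

Lemma omf_restr s th B : omf s (restr th B) = restr (th * s)%g B.
Proof. by apply/ffunP => x; rewrite !ffunE; case: ifP => //= _; rewrite permM. Qed.

Lemma phiK s : cancel (phi s) (phi (s^-1)%g).
Proof.
case=> [[p|th]|[[j mu]|t]] //=; first by rewrite mulgK.
  by rewrite omfK.
by rewrite permK.
Qed.

Lemma phi_inU s v : s \in G -> inU G Bp v -> inU G Bp (phi s v).
Proof.
move=> sG; case: v => [[p|th]|[[j mu]|t]] //=.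
  by move=> thG; rewrite groupM.
move=> /andP [/existsP [th /andP [thG /existsP [B /andP [BB /eqP emu]]]] nj].
apply/andP; split.
  apply/existsP; exists (th * s)%g; rewrite groupM //=.
  by apply/existsP; exists B; rewrite BB emu omf_restr eqxx.
by rewrite ffunE; case: (mu j) nj.
Qed.

Lemma phi_cover s a b : Defs.cover Bp (phi s a) (phi s b) = Defs.cover Bp a b.
Proof.
case: a => [[[i []]|th]|[[j mu]|t]]; case: b => [[[i' []]|th']|[[j' mu']|t']] //=.
- apply: eq_existsb => B; congr (_ && _).
  by rewrite -omf_restr (inj_eq (@omf_inj s)).
- rewrite ffunE; case: (mu j) => [y|] //=.
  by rewrite !(inj_eq (@Some_inj _)) (inj_eq (@perm_inj _ s)).
Qed.

Definition psiU s (sG : s \in G) (x : U) : U :=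
  exist (fun v => inU G Bp v) (phi s (val x)) (phi_inU sG (valP x)).

Lemma psiU_inj s (sG : s \in G) : injective (psiU sG).
Proof.
move=> x y /(congr1 val) /= /(congr1 (phi (s^-1)%g)); rewrite !phiK.
exact: val_inj.
Qed.

Definition PsiS s (sG : s \in G) : {perm U} := perm (@psiU_inj s sG).

Lemma cm t (tG : t \in G) (a b : U) :
    Defs.cover Bp (val a) (val b) -> Defs.cover Bp (val (psiU tG a)) (val (psiU tG b)).
Proof. by rewrite phi_cover. Qed.

Lemma PsiS_aut s (sG : s \in G) : PsiS sG \in Aut.
Proof.
rewrite inE; apply/forallP => x; apply/forallP => y; rewrite !permE.
have sVG : (s^-1)%g \in G by rewrite groupV.
apply/eqP; apply/idP/idP.
  exact: (conn_map (@cm s sG)).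
move=> h; have := conn_map (@cm _ sVG) h.
have ex : forall z, psiU sVG (psiU sG z) = z by move=> z; apply: val_inj; exact: phiK.
by rewrite !ex.
Qed.

Lemma fperm_PsiS s (sG : s \in G) : fperm (PsiS sG) = s.
Proof.
apply/permP => i; rewrite fpermE ?PsiS_aut //.
by rewrite /fext permE.
Qed.
End Main.

Theorem theorem2p4 (n : nat) (G : {group {perm 'I_n}}) (Bp : {set {set 'I_n}}) :
  0 < n -> block_partition G Bp ->
  (forall Psi, Psi \in AutU G Bp ->
     forall x : Uty G Bp, inTpart (val x) = inTpart (val (Psi x))) /\
  exists f : {morphism AutU G Bp >-> {perm 'I_n}},
    isom (AutU G Bp) G f /\
    (forall Psi, Psi \in AutU G Bp -> forall i : 'I_n, Psi (tT G Bp i) = tT G Bp (f Psi i)).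
Proof.
move=> n0 hBp; split.
  move=> Psi A x; rewrite (_ : inTpart (val x) = (kind (val x) == 4)); last first.
    by case: (val x) => [[[? []]|?]|[[??]|?]].
  rewrite (_ : inTpart (val (Psi x)) = (kind (val (Psi x)) == 4)); last first.
    by case: (val (Psi x)) => [[[? []]|?]|[[??]|?]].
  by rewrite (kind_pres hBp n0 x A).
exists (fmorph hBp n0); split; last first.
  by move=> Psi A i; rewrite /= fpermE // fextE.
apply/isomP; split.
  apply/injmP => P Q PA QA e.
  have QVA : (Q^-1)%g \in AutU G Bp by rewrite groupV.
  have : fperm (P * Q^-1)%g = 1%g.
    have hV : fperm (Q^-1)%g = (fperm Q)^-1%g := morphV (fmorph hBp n0) QA.
    have e' : fperm P = fperm Q := e.
    by rewrite fperm_morph // hV e' mulgV.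
  move/(ker_triv hBp n0 (groupM PA QVA)) => /eqP.
  by rewrite -eq_mulgV1 => /eqP.
rewrite morphimEdom; apply/setP => s; apply/imsetP/idP => [[P PA ->]|sG].
  exact: fperm_in_G.
exists (PsiS Bp sG); first exact: PsiS_aut.
by rewrite /= (fperm_PsiS hBp n0).
Qed.
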